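(* Let $(G,E)$ be an undirected weighted graph with nodes $n_1,\dots,n_N$, symmetric nonnegative weights $w_{ij}$, strengths $k_i=\sum_sw_{is}$, $2m=\sum_ik_i>0$, $\gamma\in\mathbb R$, $\hat n\ge1$. For each $\epsilon>0$ let $f^\epsilon$ be a global minimizer over $X=\{f:G\to\mathbb R^{\hat n}\}$ of $$H_\epsilon(f)=\sum_{l=1}^{\hat n}\langle f^{(l)},\mathbf Lf^{(l)}\rangle+\frac{1}{\epsilon^2}\sum_{i=1}^N W_{\mathrm{multi}}(f(n_i))-\gamma\|f-\mathrm{mean}(f)\|_{\ell_2}^2.$$ Then for any sequence $\epsilon_n\to0^+$, any convergent subsequence of $(f^{\epsilon_n})$ converges (in $X\cong\mathbb R^{N\times\hat n}$) to the partition function of a partition that is a global maximizer of the modularity $Q$ among all partitions of $G$ into at most $\hat n$ communities.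
   Context: $\mathbf L=\mathbf D-\mathbf W$ is the graph Laplacian ($\mathbf W=[w_{ij}]$, $\mathbf D=\mathrm{diag}(k_i)$), with $\langle z,\mathbf Lz\rangle=\frac12\sum_{i,j}w_{ij}(z_i-z_j)^2$. $f=(f^{(1)},\dots,f^{(\hat n)})$. $V^{\hat n}=\{\vec e_1,\dots,\vec e_{\hat n}\}$ is the standard basis of $\mathbb R^{\hat n}$; $W_{\mathrm{multi}}(x)=\prod_{l=1}^{\hat n}\|x-\vec e_l\|_{\ell_1}^2$. For $h:G\to\mathbb R$: $\|h\|_{\ell_2}^2=\sum_ik_ih_i^2$, $\mathrm{mean}(h)=\frac1{2m}\sum_ik_ih_i$; for vector-valued $f$, $\|f\|_{\ell_2}^2=\sum_l\|f^{(l)}\|_{\ell_2}^2$ and $\mathrm{mean}$ is componentwise. A partition into at most $\hat n$ communities is an assignment $g_i\in\{1,\dots,\hat n\}$ (communities may be empty); its partition function is $f:G\to V^{\hat n}$, $f(n_i)=\vec e_{g_i}$. Its modularity is $Q(g)=\frac1{2m}\sum_{i,j}\big(w_{ij}-\gamma\frac{k_ik_j}{2m}\big)\delta(g_i,g_j)$, with $\delta(g_i,g_j)=1$ if $g_i=g_j$ and $0$ otherwise. *)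

(* Defs.v *)
From HB Require Import structures.
From mathcomp Require Import all_boot all_order all_algebra.
From mathcomp Require Import all_classical all_reals all_analysis.
Set Implicit Arguments. Unset Strict Implicit. Unset Printing Implicit Defensive.
Import Order.TTheory GRing.Theory Num.Theory.
Local Open Scope ring_scope.

Section Modularity.
Variables (R : realType) (N : nat).
Implicit Types (w : 'I_N -> 'I_N -> R).

Definition strength w (i : 'I_N) : R := \sum_(s < N) w i s.
Definition twom w : R := \sum_(i < N) strength w i.
(* <z, L z> with L = D - W *)
Definition laplace_form w (z : 'I_N -> R) : R :=
  \sum_(i < N) z i * (strength w i * z i - \sum_(j < N) w i j * z j).
Definition gmean w (h : 'I_N -> R) : R :=
  (twom w)^-1 * \sum_(i < N) strength w i * h i.
Definition l2sq w (h : 'I_N -> R) : R :=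
  \sum_(i < N) strength w i * h i ^+ 2.

Definition Wmulti (nh : nat) (x : 'I_nh -> R) : R :=
  \prod_(l < nh) (\sum_(c < nh) `|x c - (c == l)%:R|) ^+ 2.

(* f : G -> R^nh is represented by the N x nh matrix with f i l = f^(l)(n_i) *)
Definition Heps (nh : nat) w (gamma eps : R) (f : 'M[R]_(N, nh)) : R :=
  \sum_(l < nh) laplace_form w (fun i => f i l)
  + eps ^-2 * \sum_(i < N) Wmulti (fun l => f i l)
  - gamma * \sum_(l < nh) l2sq w (fun i => f i l - gmean w (fun j => f j l)).

Definition partition_fun (nh : nat) (g : 'I_N -> 'I_nh) : 'M[R]_(N, nh) :=
  \matrix_(i < N, l < nh) (g i == l)%:R.

Definition modularity (nh : nat) w (gamma : R) (g : 'I_N -> 'I_nh) : R :=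
  (twom w)^-1 * \sum_(i < N) \sum_(j < N)
     (w i j - gamma * (strength w i * strength w j / twom w)) * (g i == g j)%:R.
End Modularity.

Arguments strength {R N} w i.
Arguments twom {R N} w.
Arguments Heps {R N nh} w gamma eps f.
Arguments partition_fun {R N nh} g.
Arguments modularity {R N nh} w gamma g.

(* Main.v *)
Require Import Defs.
From HB Require Import structures.
From mathcomp Require Import all_boot all_order all_algebra.
From mathcomp Require Import all_classical all_reals all_analysis.
From mathcomp Require Import ring lra.
Import Order.TTheory GRing.Theory Num.Theory numFieldNormedType.Exports.
Local Open Scope classical_set_scope.
Local Open Scope ring_scope.

Section Alg.
Variables (R : realType) (N nh : nat) (w : 'I_N -> 'I_N -> R) (gamma : R).

Definition quad (f : 'M[R]_(N, nh)) : R :=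
  \sum_(l < nh) laplace_form w (fun i => f i l)
  - gamma * \sum_(l < nh) l2sq w (fun i => f i l - gmean w (fun j => f j l)).

Definition Wsum (f : 'M[R]_(N, nh)) : R := \sum_(i < N) Wmulti (fun l => f i l).

Lemma HepsE eps f : Heps w gamma eps f = quad f + eps ^-2 * Wsum f.
Proof. by rewrite /Heps /quad /Wsum; ring. Qed.

Lemma sumI (x : 'I_nh -> R) (a : 'I_nh) : \sum_(l < nh) (a == l)%:R * x l = x a.
Proof.
rewrite (bigD1 a) //= eqxx mul1r big1 ?addr0 // => l.
by rewrite eq_sym => /negbTE ->; rewrite mul0r.
Qed.

Lemma l2sq_mean (h : 'I_N -> R) : twom w != 0 ->
  l2sq w (fun i => h i - gmean w h) =
  \sum_(i < N) strength w i * h i ^+ 2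
   - (\sum_(i < N) strength w i * h i) ^+ 2 / twom w.
Proof.
move=> H; rewrite /l2sq /gmean.
set S := \sum_(i < N) _ * h i; set c := (twom w)^-1 * S.
transitivity (\sum_(i < N) (strength w i * h i ^+ 2 - (2 * c) * (strength w i * h i)
     + c ^+ 2 * strength w i)).
  by apply: eq_bigr => i _; ring.
rewrite big_split /= sumrB -!mulr_sumr -/S.
rewrite /c -/(twom w); field.
exact: H.
Qed.

Lemma quad_part (g : 'I_N -> 'I_nh) : twom w != 0 ->
  quad (partition_fun g) = twom w * (1 - gamma) - twom w * modularity w gamma g.
Proof.
move=> H; rewrite /quad /modularity.
have L : \sum_(l < nh) laplace_form w (fun i => partition_fun g i l)
   = twom w - \sum_(i < N) \sum_(j < N) w i j * (g i == g j)%:R.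
  rewrite /laplace_form exchange_big /= /twom -sumrB; apply: eq_bigr => i _.
  under eq_bigr do rewrite !mxE.
  rewrite (sumI (fun l => strength w i * (g i == l)%:R - \sum_(j < N) w i j * partition_fun g j l)).
  rewrite eqxx mulr1; congr (_ - _); apply: eq_bigr => j _; rewrite mxE eq_sym //.
have Q : \sum_(l < nh) l2sq w (fun i => partition_fun g i l - gmean w (fun j => partition_fun g j l))
   = twom w - (\sum_(i < N) \sum_(j < N) strength w i * strength w j * (g i == g j)%:R) / twom w.
  under eq_bigr do rewrite l2sq_mean //.
  rewrite sumrB; congr (_ - _).
    rewrite exchange_big /=; apply: eq_bigr => i _.
    under eq_bigr do rewrite mxE mulrC -mulrA.
    by rewrite (sumI (fun l => (g i == l)%:R * strength w i)) eqxx mul1r.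
  rewrite -mulr_suml; congr (_ * _).
  under eq_bigr do rewrite expr2 mulr_suml.
  rewrite exchange_big /=; apply: eq_bigr => i _.
  under eq_bigr do rewrite mulr_sumr.
  rewrite exchange_big /=; apply: eq_bigr => j _.
  under eq_bigr do rewrite !mxE.
  transitivity (\sum_(l < nh) (g i == l)%:R * (strength w i * strength w j * (g j == l)%:R)).
    by apply: eq_bigr => l _; ring.
  by rewrite sumI eq_sym.
rewrite L Q.
under [X in _ = _ - _ * (_ * X)]eq_bigr do (under eq_bigr do rewrite mulrBl; rewrite sumrB).
rewrite sumrB.
set A := \sum_(i < N) _.
set B := \sum_(i < N) _.
set C := \sum_(i < N) _.
have -> : C = gamma / twom w * B.
  rewrite /B /C mulr_sumr; apply: eq_bigr => i _; rewrite mulr_sumr.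
  apply: eq_bigr => j _; field; exact: H.
by field.
Qed.
End Alg.
Arguments quad {R N nh} w gamma f.
Arguments Wsum {R N nh} f.
Arguments HepsE {R N nh} w gamma eps f.
Arguments quad_part {R N nh} w gamma g.
Lemma subseq_cvg (R : realType) (u : nat -> R) (phi : nat -> nat) (l : R) :
  (forall n, (phi n < phi n.+1)%N) -> u @ \oo --> l -> (fun n => u (phi n)) @ \oo --> l.
Proof.
move=> Hphi Hu.
have ge : forall n, (n <= phi n)%N.
  elim=> [|n IH] //; exact: leq_ltn_trans IH (Hphi n).
have : phi @ \oo --> \oo.
  apply/cvgnyPge => A; exists A => // n /= Hn; exact: leq_trans Hn (ge n).
move=> Hp; exact: (cvg_comp _ _ Hp Hu).
Qed.

Lemma cvg_entry (R : realType) m n (u : nat -> 'M[R]_(m, n)) (F : 'M[R]_(m, n)) i j :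
  u @ \oo --> F -> (fun k => u k i j) @ \oo --> F i j.
Proof.
move=> Hu; have H := proj1 (@cvg_mx_entourageP R m n (u @ \oo) _ F) Hu.
apply/cvg_app_entourageP => A eA.
have HH : \forall k \near \oo, forall i j, (F i j, u k i j) \in A by apply: H.
near=> k. have := (near HH k _ i j). rewrite inE. exact. Unshelve. all: by end_near. Qed.

Lemma cvg_sumo (R : realType) (T : Type) (F : set_system T) (FF : Filter F) k
   (f : 'I_k -> T -> R) (a : 'I_k -> R) :
  (forall i, f i x @[x --> F] --> a i) ->
  \sum_(i < k) f i x @[x --> F] --> \sum_(i < k) a i.
Proof. move=> H; apply: cvg_big => //; exact: add_continuous. Qed.

Lemma cvg_prodo (R : realType) (T : Type) (F : set_system T) (FF : Filter F) k
   (f : 'I_k -> T -> R) (a : 'I_k -> R) :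
  (forall i, f i x @[x --> F] --> a i) ->
  \prod_(i < k) f i x @[x --> F] --> \prod_(i < k) a i.
Proof. move=> H; apply: cvg_big => //; exact: mul_continuous. Qed.
Theorem mainTheorem3 (R : realType) (N nh : nat) (w : 'I_N -> 'I_N -> R)
  (gamma : R) (fe : R -> 'M[R]_(N, nh)) :
  (forall i j, w i j = w j i) ->
  (forall i j, 0 <= w i j) ->
  0 < twom w ->
  (0 < nh)%N ->
  (forall eps : R, 0 < eps ->
     forall f : 'M[R]_(N, nh), Heps w gamma eps (fe eps) <= Heps w gamma eps f) ->
  forall (epsn : nat -> R) (phi : nat -> nat) (F : 'M[R]_(N, nh)),
    (forall n, 0 < epsn n) ->
    epsn @ \oo --> 0 ->
    (forall n, (phi n < phi n.+1)%N) ->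
    (fun n => fe (epsn (phi n))) @ \oo --> F ->
    exists g : 'I_N -> 'I_nh,
      F = partition_fun g /\
      (forall g' : 'I_N -> 'I_nh, modularity w gamma g' <= modularity w gamma g).
Proof.
move=> _ _ m0 nh0 Hmin epsn phi F epos eps0 phiinc cvgF.
set u := fun n => fe (epsn (phi n)) in cvgF.
set e := fun n => epsn (phi n).
have e0 : e @ \oo --> 0 by exact: subseq_cvg.
have epos' : forall n, 0 < e n by move=> n; exact: epos.
have Hent : forall i l, (fun n => u n i l) @ \oo --> F i l.
  by move=> i l; exact: cvg_entry.
have cvgmean : forall l, (fun n => gmean w (fun j => u n j l)) @ \oo --> gmean w (fun j => F j l).
  move=> l; rewrite /gmean; apply: cvgMl_tmp; apply: cvg_sumo => j.
  apply: cvgMl_tmp; exact: Hent.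
have cq : (fun n => quad w gamma (u n)) @ \oo --> quad w gamma F.
  rewrite /quad; apply: cvgB.
    apply: cvg_sumo => l; rewrite /laplace_form; apply: cvg_sumo => i.
    apply: cvgM; first exact: Hent.
    apply: cvgB; first by apply: cvgMl_tmp; exact: Hent.
    apply: cvg_sumo => j; apply: cvgMl_tmp; exact: Hent.
  apply: cvgMl_tmp; apply: cvg_sumo => l; rewrite /l2sq; apply: cvg_sumo => i.
  apply: cvgMl_tmp; rewrite expr2; apply: cvgM; apply: cvgB; try exact: Hent; exact: cvgmean.
have cW : (fun n => Wsum (u n)) @ \oo --> Wsum F.
  rewrite /Wsum; apply: cvg_sumo => i; rewrite /Wmulti; apply: cvg_prodo => l.
  rewrite expr2; apply: cvgM; apply: cvg_sumo => c; apply: cvg_norm; apply: cvgB;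
    [exact: Hent | exact: cvg_cst | exact: Hent | exact: cvg_cst].
have Wge0 : forall f : 'M[R]_(N, nh), 0 <= Wsum f.
  move=> f; apply: sumr_ge0 => i _; apply: prodr_ge0 => l _; exact: sqr_ge0.
have Wpart : forall g : 'I_N -> 'I_nh, Wsum (partition_fun (R:=R) g) = 0.
  move=> g; rewrite /Wsum /Wmulti big1 // => i _; apply/eqP/prodf_eq0; exists (g i) => //.
  rewrite sqrf_eq0 big1 // => c _; rewrite mxE eq_sym subrr normr0 //.
have key : forall (n : nat) (f : 'M[R]_(N, nh)), quad w gamma (u n) + (e n)^-2 * Wsum (u n)
                        <= quad w gamma f + (e n)^-2 * Wsum f.
  move=> n f; rewrite -!HepsE; exact: (Hmin _ (epos' n) f).
have ei0 : forall n, 0 <= (e n)^-2.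
  by move=> n; rewrite invr_ge0 exprn_ge0 // ltW.
have Hq : forall g' : 'I_N -> 'I_nh, quad w gamma F <= quad w gamma (partition_fun g').
  move=> g'; apply: (cvgr_to_le cq); near=> n.
  have := key n (partition_fun g'); rewrite Wpart mulr0 addr0.
  apply: le_trans; rewrite lerDl; exact: mulr_ge0.
pose P0 := partition_fun (R:=R) (fun _ : 'I_N => Ordinal nh0).
have WF : Wsum F = 0.
  apply/eqP; rewrite eq_le Wge0 andbT.
  have c0 : (fun n => e n ^+ 2 * (quad w gamma P0 - quad w gamma (u n))) @ \oo --> 0.
    have -> : (0:R) = 0 ^+ 2 * (quad w gamma P0 - quad w gamma F) by rewrite expr0n mul0r.
    apply: cvgM; first by rewrite expr2; apply: cvgM; exact: e0.
    apply: cvgB; [exact: cvg_cst | exact: cq].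
  apply: (ler_cvg_to cW c0); near=> n.
  have := key n P0; rewrite /P0 Wpart mulr0 addr0 -/P0 -lerBrDl => H.
  have en : e n ^+ 2 != 0 by rewrite expf_neq0 // gt_eqF.
  have -> : Wsum (u n) = e n ^+ 2 * ((e n)^-2 * Wsum (u n)) by rewrite mulrA mulfV // mul1r.
  apply: ler_wpM2l => //; exact: sqr_ge0.
have rows : forall i, exists l : 'I_nh, forall c, F i c = (c == l)%:R.
  move=> i.
  have /prodf_eq0 [l _ Hl] : Wmulti (fun l => F i l) == 0.
    apply/eqP; apply: (psumr_eq0P _ WF) => // j _; apply: prodr_ge0 => l _; exact: sqr_ge0.
  exists l => c; move: Hl; rewrite sqrf_eq0 => /eqP Hl.
  have /(_ c isT) := psumr_eq0P (fun c _ => normr_ge0 _) Hl.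
  by move/eqP; rewrite normr_eq0 subr_eq0 => /eqP.
have [g Hg] := boolp.choice rows.
have FP : F = partition_fun g.
  by apply/matrixP => i l; rewrite mxE Hg eq_sym.
exists g; split => // g'.
have := Hq g'; rewrite FP !quad_part ?gt_eqF //.
move: m0; set t := twom w; move=> m0 H; nra.
Unshelve. all: by end_near.
Qed.
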